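(* Consider the continuous-time system $\dot x=Ax+Bu+Lf(t,z)$, $z=Hx$, with $A,B,L$ unknown, $H\in\mathbb{R}^{p\times n}$ known, controlled by $u=Kx+Mf(t,z)$, and data $U_0,X_0,X_1,F_0$ (with $X_1$ containing sampled state derivatives) satisfying $X_1=AX_0+BU_0+LF_0$. Suppose there exist $Y_1\in\mathbb{R}^{T\times n}$, $Y_2\in\mathbb{R}^{T\times p}$ such that $X_0Y_1$ is symmetric positive definite, $Y_1^\top X_1^\top+X_1Y_1\prec 0$, $X_1Y_2+X_0Y_1H^\top=0$, $X_0Y_2=0$, $F_0Y_2=I_p$, $F_0Y_1=0$. Then with $K=U_0Y_1(X_0Y_1)^{-1}$ and $M=U_0Y_2$, the origin of $\dot x=(A+BK)x+(L+BM)f(t,Hx)$ is globally uniformly asymptotically stable for every $f:\mathbb{R}\times\mathbb{R}^p\to\mathbb{R}^p$ (piecewise continuous in $t$, locally Lipschitz in $z$) satisfying $z^\top f(t,z)\ge 0$ for all $t,z$.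
   Context: Data: $U_0=[u(t_0)\cdots u(t_{T-1})]$, $X_0=[x(t_0)\cdots x(t_{T-1})]$, $X_1=[\dot x(t_0)\cdots\dot x(t_{T-1})]$, $F_0=[f(t_0,z(t_0))\cdots f(t_{T-1},z(t_{T-1}))]$ from an experiment on the system. *)

(* Defs.v *)
From HB Require Import structures.
From mathcomp Require Import all_boot all_order all_algebra.
From mathcomp Require Import all_classical all_reals all_analysis.
Set Implicit Arguments. Unset Strict Implicit. Unset Printing Implicit Defensive.
Import Order.TTheory GRing.Theory Num.Theory.
Import numFieldNormedType.Exports.
Local Open Scope classical_set_scope.
Local Open Scope ring_scope.

Section Defs.
Variable R : realType.

Definition qform n (S : 'M[R]_n) (v : 'cV[R]_n) : R := (v^T *m S *m v) 0 0.

Definition posdef n (S : 'M[R]_n) : Prop :=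
  S^T = S /\ forall v : 'cV[R]_n, v != 0 -> 0 < qform S v.

Definition negdef n (S : 'M[R]_n) : Prop :=
  S^T = S /\ forall v : 'cV[R]_n, v != 0 -> qform S v < 0.

Definition piecewise_continuous_t p (f : R -> 'cV[R]_p -> 'cV[R]_p) : Prop :=
  forall a b : R, exists s : seq R, forall t z, a <= t <= b -> t \notin s ->
    {for (t, z), continuous (fun q : R * 'cV[R]_p => f q.1 q.2)}.

Definition locally_lipschitz_z p (f : R -> 'cV[R]_p -> 'cV[R]_p) : Prop :=
  forall (z0 : 'cV[R]_p) (a b : R), exists r Lc : R, 0 < r /\
    forall t z1 z2, a <= t <= b -> `|z1 - z0| < r -> `|z2 - z0| < r ->
      `|f t z1 - f t z2| <= Lc * `|z1 - z2|.

Definition sector p (f : R -> 'cV[R]_p -> 'cV[R]_p) : Prop :=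
  forall t (z : 'cV[R]_p), 0 <= (z^T *m f t z) 0 0.

(* x is a solution of dx/dt = F(t,x) on [t0, t1): continuous there, and
   differentiable with derivative F(t, x t) at every t in (t0,t1) outside a
   set of exceptional times that is finite on every bounded interval
   (allowing the kinks caused by piecewise continuity in t). *)
Definition is_solution n (F : R -> 'cV[R]_n -> 'cV[R]_n) (t0 t1 : R)
    (x : R -> 'cV[R]_n) : Prop :=
  t0 < t1 /\
  {within [set t | t0 <= t < t1], continuous x} /\
  exists D : set R, (forall a b : R, finite_set (D `&` [set t | a <= t <= b])) /\
    forall t, t0 < t < t1 -> ~ D t -> is_derive t 1 x (F t (x t)).

(* Global uniform asymptotic stability of the origin (Khalil, Def. 4.4):
   uniform stability, global uniform boundedness, global uniform attractivity,
   for every solution on every interval [t0, t1). *)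
Definition GUAS n (F : R -> 'cV[R]_n -> 'cV[R]_n) : Prop :=
  (forall e : R, 0 < e -> exists d : R, 0 < d /\
     forall t0 t1 x, is_solution F t0 t1 x -> `|x t0| < d ->
       forall t, t0 <= t < t1 -> `|x t| < e) /\
  (forall a : R, 0 < a -> exists c : R, 0 < c /\
     forall t0 t1 x, is_solution F t0 t1 x -> `|x t0| < a ->
       forall t, t0 <= t < t1 -> `|x t| < c) /\
  (forall eta e : R, 0 < eta -> 0 < e -> exists T : R, 0 < T /\
     forall t0 t1 x, is_solution F t0 t1 x -> `|x t0| < eta ->
       forall t, t0 + T <= t < t1 -> `|x t| < e).

End Defs.

(* Main.v *)
Require Import Defs.
From HB Require Import structures.
From mathcomp Require Import all_boot all_order all_algebra.
From mathcomp Require Import all_classical all_reals all_analysis.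
From mathcomp Require Import ring lra.
Import Order.TTheory GRing.Theory Num.Theory.
Import numFieldNormedType.Exports.
Local Open Scope ring_scope.
Section Mono.
Context {R : realType}.
Local Open Scope classical_set_scope.

Lemma finite_cover (X : set R) : finite_set X -> exists l : seq R, forall x, X x -> x \in l.
Proof.
move=> /finite_fsetP [B ->]; exists (finmap.enum_fset B) => x /=; by [].
Qed.

Lemma mvt_case (W : R -> R) (t0 t1 : R) (D : set R) :
  {within [set t | t0 <= t < t1], continuous W} ->
  (forall t, t0 < t < t1 -> ~ D t -> derivable W t 1 /\ 'D_1 W t <= 0) ->
  forall s u, t0 <= s -> s <= u -> u < t1 -> (forall x, s < x < u -> ~ D x) ->
  W u <= W s.
Proof.
move=> Wc Wd s u t0s su ut1 nD.
case: (ltgtP s u) su => // [su _|-> _]; last by [].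
have Hd : forall x, x \in `]s, u[%R -> is_derive x 1 W ('D_1 W x).
  move=> x; rewrite in_itv /= => /andP[sx xu].
  have [dW _] := Wd x (ltac:(apply/andP; split; [exact: le_lt_trans t0s sx|exact: lt_trans xu ut1]))
    (nD x ltac:(by apply/andP)).
  exact: derivableP.
have Hc : {within `[s, u], continuous W}.
  apply: continuous_subspaceW Wc => x /=; rewrite in_itv /= => /andP[sx xu].
  by rewrite (le_trans t0s sx) (le_lt_trans xu ut1).
have [c cin E] := MVT su Hd Hc.
move: cin; rewrite in_itv /= => /andP[sc cu].
have [_ dc] := Wd c (ltac:(apply/andP; split; [exact: le_lt_trans t0s sc|exact: lt_trans cu ut1]))
    (nD c ltac:(by apply/andP)).
rewrite -subr_le0 E; apply: mulr_le0_ge0 => //.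
by rewrite subr_ge0 ltW.
Qed.


Lemma nonincr_except (W : R -> R) (t0 t1 : R) (D : set R) :
  {within [set t | t0 <= t < t1], continuous W} ->
  (forall a b : R, finite_set (D `&` [set t | a <= t <= b])) ->
  (forall t, t0 < t < t1 -> ~ D t -> derivable W t 1 /\ 'D_1 W t <= 0) ->
  forall s u, t0 <= s -> s <= u -> u < t1 -> W u <= W s.
Proof.
move=> Wc Dfin Wd s u t0s su ut1.
have [l Hl] := finite_cover _ (Dfin s u).
have main : forall k (l : seq R) s u, (size l <= k)%N -> t0 <= s -> s <= u -> u < t1 ->
   (forall x, D x -> s < x < u -> x \in l) -> W u <= W s.
  elim=> [|k IH] l' s' u' szl t0s' su' ut1' Hl'.
  - apply: (mvt_case W t0 t1 D Wc Wd) => // x xin Dx.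
    move: szl; rewrite leqn0 => /nilP El; move: (Hl' x Dx xin); by rewrite El.
  - case: (boolP (has (fun d => (s' < d) && (d < u')) l')) => [/hasP[d dl /andP[sd du]]|nh].
    + set l2 := seq.filter (predC1 d) l'.
      have sz2 : (size l2 <= k)%N.
        rewrite size_filter -ltnS; apply: leq_trans szl.
        rewrite -(count_predC (predC1 d) l') -addn1 leq_add2l.
        rewrite -has_count; apply/hasP; exists d => //=; by rewrite eqxx.
      have mem2 : forall x, D x -> x \in l' -> x != d -> x \in l2.
        by move=> x _ xl xd; rewrite mem_filter /= xd.
      apply: (@le_trans _ _ (W d)).
      * apply: (IH l2 d u') => //; first exact: le_trans t0s' (ltW sd).
        by rewrite ltW.
        move=> x Dx /andP[dx xu]; apply: mem2 => //.
          apply: Hl' => //; by rewrite (lt_trans sd dx).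
        by rewrite gt_eqF.
      * apply: (IH l2 s' d) => //; first exact: ltW.
        exact: lt_trans du ut1'.
        move=> x Dx /andP[sx xd]; apply: mem2 => //.
          apply: Hl' => //; by rewrite sx (lt_trans xd du).
        by rewrite lt_eqF.
    + apply: (mvt_case W t0 t1 D Wc Wd) => // x xin Dx.
      move/negP: nh; apply; apply/hasP; exists x => //; exact: Hl'.
apply: (main (size l) l) => // x Dx /andP[sx xu]; apply: Hl; split => //.
by rewrite /= !ltW.
Qed.

End Mono.
Section Norms.
Context {R : realType}.
Local Open Scope classical_set_scope.

Lemma mx_entry_le a b (N : 'M[R]_(a, b)) i j : `|N i j| <= `|N|.
Proof.
rewrite [leRHS]/Num.Def.normr /= mx_normrE.
apply: le_trans; last exact: (le_bigmax _ _ (i, j)).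
by [].
Qed.

Lemma mx_norm_le a b (N : 'M[R]_(a, b)) e : 0 <= e ->
  (forall i j, `|N i j| <= e) -> `|N| <= e.
Proof.
move=> e0 H; rewrite [leLHS]/Num.Def.normr /= mx_normrE.
by apply: bigmax_le => // -[i j] _; exact: H.
Qed.

Lemma norm_tr a b (N : 'M[R]_(a, b)) : `|N^T| = `|N|.
Proof.
apply/le_anti/andP; split; apply: mx_norm_le => // i j.
- by rewrite mxE; exact: mx_entry_le.
- by have := mx_entry_le _ _ N^T j i; rewrite mxE.
Qed.

Lemma qformZ n (M : 'M[R]_n) (k : R) v : qform M (k *: v) = k ^+ 2 * qform M v.
Proof.
rewrite /qform.
have -> : (k *: v)^T = k *: v^T by apply/matrixP=> i j; rewrite !mxE.
rewrite -!scalemxAl -scalemxAr !mxE.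
by rewrite expr2 mulrA.
Qed.

Lemma qform0 n (M : 'M[R]_n) : qform M 0 = 0.
Proof. by rewrite /qform trmx0 mul0mx mul0mx mxE. Qed.

Lemma bil_sum n (M : 'M[R]_n) (u w : 'cV[R]_n) :
  (u^T *m M *m w) 0 0 = \sum_j \sum_i u i 0 * M i j * w j 0.
Proof.
rewrite mxE; apply: eq_bigr => j _; rewrite mxE big_distrl /=.
by apply: eq_bigr => i _; rewrite mxE.
Qed.

Lemma qform_rV_cont n (M : 'M[R]_n) :
  continuous (fun w : 'rV[R]_n => qform M w^T).
Proof.
have -> : (fun w : 'rV[R]_n => qform M w^T) =
   \sum_j \sum_i ((fun w : 'rV[R]_n => w 0 i) * cst (M i j) * (fun w : 'rV[R]_n => w 0 j)).
  apply/funext => w; rewrite /qform bil_sum !fct_sumE; apply: eq_bigr => j _.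
  rewrite !fct_sumE; apply: eq_bigr => i _; by rewrite !mxE.
move=> w; apply: differentiable_continuous.
apply: differentiable_sum => j; apply: differentiable_sum => i.
apply: differentiableM; first apply: differentiableM.
- exact: differentiable_coord.
- exact: differentiable_cst.
- exact: differentiable_coord.
Qed.


Lemma qform_bounds n (M : 'M[R]_n) : (forall v, v != 0 -> 0 < qform M v) ->
  exists c C : R, 0 < c /\ c <= C /\
    forall v, c * `|v| ^+ 2 <= qform M v /\ qform M v <= C * `|v| ^+ 2.
Proof.
case: n M => [|n] M Mpos.
  exists 1, 1; split => //; split => // v.
  have -> : v = 0 by apply/matrixP => -[].
  by rewrite qform0 normr0 expr0n /= mulr0; split.
pose g := fun w : 'rV[R]_n.+1 => qform M w^T.
pose Sph := [set w : 'rV[R]_n.+1 | `|w| = 1].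
have w0S : Sph (const_mx 1).
  rewrite /Sph /=; apply/le_anti/andP; split.
    by apply: mx_norm_le => // i j; rewrite mxE normr1.
  by have := mx_entry_le _ _ (const_mx 1 : 'rV[R]_n.+1) 0 0; rewrite mxE normr1.
have Sne : Sph !=set0 by exists (const_mx 1).
have Scomp : compact Sph.
  apply: bounded_closed_compact.
    exists 1; split; first exact: real1.
    by move=> y y1 w /= ->; exact: ltW.
  have -> : Sph = (@Num.Def.normr _ _) @^-1` [set x : R | x = 1] by [].
  apply: preimage_closed; last exact: closed_eq.
  by move=> *; exact: norm_continuous.
have gc : {within Sph, continuous g} by apply: continuous_subspaceT; exact: qform_rV_cont.
have [cmin cminS Hmin] := EVT_min_rV Sne Scomp gc.
have [cmax cmaxS Hmax] := EVT_max_rV Sne Scomp gc.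
move: cminS cmaxS; rewrite !inE /Sph /= => cmin1 cmax1.
have gpos : 0 < g cmin.
  apply: Mpos; apply/eqP => E.
  by move: cmin1; rewrite -norm_tr E normr0 => /eqP; rewrite eq_sym oner_eq0.
exists (g cmin), (g cmax); split => //; split.
  by apply: Hmin; rewrite inE /Sph /= cmax1.
move=> v; have [->|vn0] := eqVneq v 0.
  by rewrite qform0 normr0 expr0n /= !mulr0; split.
set a := `|v|.
have a0 : 0 < a by rewrite normr_gt0.
pose w := (a^-1 *: v)^T.
have wS : w \in Sph.
  rewrite inE /Sph /= /w norm_tr normrZ normrV ?unitfE ?gt_eqF // normr_id.
  by rewrite mulVf // gt_eqF.
have E : qform M v = g w * a ^+ 2.
  rewrite /g /w trmxK qformZ.
  field; by rewrite gt_eqF.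
rewrite E; split.
  by apply: ler_wpM2r; [rewrite exprn_ge0 // ltW | exact: Hmin].
by apply: ler_wpM2r; [rewrite exprn_ge0 // ltW | exact: Hmax].
Qed.

End Norms.
Section Der.
Context {R : realType}.
Local Open Scope classical_set_scope.

Lemma comp_derive m n (x : R -> 'M[R]_(m, n)) (t : R) v i j :
  is_derive t (1:R) x v -> is_derive t (1:R) (fun s => x s i j) (v i j).
Proof.
move=> [dx Dx].
have dij := (derivable_mxP x t 1).1 dx i j.
apply: DeriveDef => //.
have := derive_mx dx; rewrite Dx => /matrixP/(_ i j); rewrite mxE => ->.
by [].
Qed.



Lemma bil_derive n (M : 'M[R]_n) (a b : R -> 'cV[R]_n) (t : R) da db :
  is_derive t 1 a da -> is_derive t 1 b db ->
  is_derive t 1 (fun s => ((a s)^T *m M *m b s) 0 0)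
    ((da^T *m M *m b t) 0 0 + ((a t)^T *m M *m db) 0 0).
Proof.
move=> Ha Hb.
have -> : (fun s => ((a s)^T *m M *m b s) 0 0) =
   \sum_j \sum_i ((fun s => a s i 0) * cst (M i j) * (fun s => b s j 0)).
  apply/funext => s; rewrite bil_sum !fct_sumE; apply: eq_bigr => j _.
  by rewrite !fct_sumE; apply: eq_bigr => i _.
apply: is_derive_eq.
  apply: is_derive_sum => j; apply: is_derive_sum => i.
  apply: is_deriveM; last exact: comp_derive.
  apply: is_deriveM; first exact: comp_derive.
  all: try exact: is_derive_cst.
rewrite !bil_sum -big_split /=; apply: eq_bigr => j _.
rewrite -big_split /=; apply: eq_bigr => i _.
rewrite /= scaler0 add0r /GRing.scale /=.
have -> : ((fun s => a s i 0) * cst (M i j)) t = a t i 0 * M i j by [].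
ring.
Qed.
End Der.
Section Lyap.
Context {R : realType}.
Local Open Scope classical_set_scope.

Lemma qform_cont n (M : 'M[R]_n) : continuous (fun v : 'cV[R]_n => qform M v).
Proof.
have -> : (fun v : 'cV[R]_n => qform M v) =
   \sum_j \sum_i ((fun w : 'cV[R]_n => w i 0) * cst (M i j) * (fun w : 'cV[R]_n => w j 0)).
  apply/funext => w; rewrite /qform bil_sum !fct_sumE; apply: eq_bigr => j _.
  by rewrite !fct_sumE; apply: eq_bigr => i _.
move=> w; apply: differentiable_continuous.
apply: differentiable_sum => j; apply: differentiable_sum => i.
apply: differentiableM; first apply: differentiableM.
- exact: differentiable_coord.
- exact: differentiable_cst.
- exact: differentiable_coord.
Qed.

Lemma exp_derive_aff (k t0 s : R) :
  is_derive s 1 (fun s => expR (k * (s - t0))) (expR (k * (s - t0)) * k).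
Proof.
have Ha : is_derive s 1 (fun s : R => k * (s - t0)) k.
  have -> : (fun s : R => k * (s - t0)) = k \*: ((@id R) - cst t0).
    by apply/funext => u.
  apply: is_derive_eq.
  by rewrite /= subr0 /GRing.scale /= mulr1.
exact: (@is_derive1_comp _ expR (fun s : R => k * (s - t0)) s _ _ _ Ha).
Qed.


Lemma lyap_decay n (F : R -> 'cV[R]_n -> 'cV[R]_n) (Q : 'M[R]_n) (k c1 c2 : R) :
  0 < k -> 0 < c1 ->
  (forall v, c1 * `|v| ^+ 2 <= qform Q v /\ qform Q v <= c2 * `|v| ^+ 2) ->
  (forall t v, ((F t v)^T *m Q *m v) 0 0 + (v^T *m Q *m F t v) 0 0 <= - (k * qform Q v)) ->
  forall t0 t1 x, is_solution F t0 t1 x -> forall t, t0 <= t < t1 ->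
    c1 * `|x t| ^+ 2 * expR (k * (t - t0)) <= c2 * `|x t0| ^+ 2.
Proof.
move=> k0 c10 Hb Hd t0 t1 x [t01 [xc [D [Dfin Dd]]]] t /andP[t0t tt1].
pose E := fun s : R => expR (k * (s - t0)).
pose V : R -> R := fun s : R => ((x s)^T *m Q *m x s) 0 0.
pose W : R -> R := E * V.
have Wd : forall s, t0 < s < t1 -> ~ D s -> derivable W s 1 /\ 'D_1 W s <= 0.
  move=> s st Ds.
  have hx := Dd s st Ds.
  have hV : is_derive s 1 V _ := bil_derive _ Q _ _ _ _ _ hx hx.
  have hE : is_derive s 1 E _ := exp_derive_aff k t0 s.
  have hW : is_derive s 1 W _ := is_deriveM hE hV.
  split; first exact: ex_derive.
  rewrite derive_val /GRing.scale /=.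
  have := Hd s (x s); rewrite -/(V s) => Hds.
  have Epos : 0 < E s by apply: expR_gt0.
  rewrite /qform -/(V s) in Hds.
  rewrite -/(E s).
  nra.
have Wc : {within [set s | t0 <= s < t1], continuous W}.
  have Ec : continuous E.
    move=> s; apply: differentiable_continuous; apply/derivable1_diffP.
    by case: (exp_derive_aff k t0 s).
  have EcA : {within [set s | t0 <= s < t1], continuous E}.
    by apply: continuous_subspaceT.
  move=> s; apply: continuousM.
    exact: EcA.
  exact: (continuous_comp (xc s) (qform_cont _ Q (x s))).
have := nonincr_except _ _ _ _ Wc Dfin Wd t0 t (lexx t0) t0t tt1.
move=> HW0; have HW : E t * V t <= E t0 * V t0 := HW0.
rewrite /E /V subrr mulr0 expR0 mul1r in HW.
have [Hl _] := Hb (x t).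
have [_ Hu] := Hb (x t0).
rewrite /qform in Hl Hu.
have Ep : 0 < expR (k * (t - t0)) by apply: expR_gt0.
nra.
Qed.

End Lyap.
Section Alg.
Context {R : realType}.

Lemma tr1 (a : 'M[R]_1) : a^T = a.
Proof. by apply/matrixP => i j; rewrite !ord1 mxE. Qed.

Lemma hd_alg n p (Z Q S : 'M[R]_n) (H : 'M[R]_(p, n)) (v : 'cV[R]_n) (g : 'cV[R]_p) :
  Q^T = Q -> Q *m S = 1%:M ->
  let w := Z *m Q *m v - S *m H^T *m g in
  (w^T *m Q *m v) 0 0 + (v^T *m Q *m w) 0 0 =
  qform (Z^T + Z) (Q *m v) - 2 * ((H *m v)^T *m g) 0 0.
Proof.
move=> QT QS w.
have E1 : w^T *m Q *m v = v^T *m Q *m w.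
  by rewrite -[LHS]tr1 !trmx_mul trmxK QT mulmxA.
have E2 : v^T *m Q *m w = (Q *m v)^T *m Z *m (Q *m v) - (H *m v)^T *m g.
  rewrite mulmxBr; congr (_ - _); first by rewrite trmx_mul QT !mulmxA.
  by rewrite trmx_mul !mulmxA -(mulmxA _ Q S) QS mulmx1.
have E3 : qform (Z^T + Z) (Q *m v) = 2 * ((Q *m v)^T *m Z *m (Q *m v)) 0 0.
  rewrite /qform mulmxDr mulmxDl [LHS]mxE.
  have -> : (Q *m v)^T *m Z^T *m (Q *m v) = ((Q *m v)^T *m Z *m (Q *m v))^T.
    by rewrite !trmx_mul !trmxK !mulmxA.
  by rewrite tr1 mulr_natl mulr2n.
rewrite E1 E2 E3 [in LHS]mxE.
have oppE : forall a : 'M[R]_1, (- a) 0 0 = - a 0 0 by move=> a; rewrite mxE.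
rewrite !oppE.
set a := (_ *m _ *m _) 0 0; set b := (_ *m _) 0 0.
ring.
Qed.


Lemma posdef_unit n (S : 'M[R]_n) : (forall v, v != 0 -> 0 < qform S v) -> S \in unitmx.
Proof.
move=> Sp; rewrite -row_free_unit -kermx_eq0; apply/negPn/negP => Kn0.
have /existsP [i Hi] : [exists i, row i (kermx S) != 0].
  apply: contraR Kn0 => /existsPn H; apply/eqP/row_matrixP => i; rewrite row0.
  exact/eqP/negPn/H.
have wS : row i (kermx S) *m S = 0 by rewrite -row_mul mulmx_ker row0.
have := Sp (row i (kermx S))^T; rewrite trmx_eq0 => /(_ Hi).
by rewrite /qform trmxK wS mul0mx mxE ltxx.
Qed.

Lemma qformN n (M : 'M[R]_n) v : qform (- M) v = - qform M v.
Proof. by rewrite /qform mulmxN mulNmx mxE. Qed.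

Lemma qformQ n (Q N : 'M[R]_n) v : Q^T = Q -> qform (Q *m N *m Q) v = qform N (Q *m v).
Proof. by move=> QT; rewrite /qform trmx_mul QT !mulmxA. Qed.

End Alg.
Theorem mainTheorem5 (R : realType) (n m p T : nat)
  (A : 'M[R]_n) (B : 'M[R]_(n, m)) (L : 'M[R]_(n, p)) (H : 'M[R]_(p, n))
  (U0 : 'M[R]_(m, T)) (X0 X1 : 'M[R]_(n, T)) (F0 : 'M[R]_(p, T))
  (Y1 : 'M[R]_(T, n)) (Y2 : 'M[R]_(T, p)) :
  X1 = A *m X0 + B *m U0 + L *m F0 ->
  posdef (X0 *m Y1) ->
  negdef (Y1^T *m X1^T + X1 *m Y1) ->
  X1 *m Y2 + X0 *m Y1 *m H^T = 0 ->
  X0 *m Y2 = 0 ->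
  F0 *m Y2 = 1%:M ->
  F0 *m Y1 = 0 ->
  let K := U0 *m Y1 *m invmx (X0 *m Y1) in
  let M := U0 *m Y2 in
  forall f : R -> 'cV[R]_p -> 'cV[R]_p,
    piecewise_continuous_t f -> locally_lipschitz_z f -> sector f ->
    GUAS (fun (t : R) (x : 'cV[R]_n) =>
            (A + B *m K) *m x + (L + B *m M) *m f t (H *m x)).
Proof.
move=> hX1 [hST hSp] [hNT hNn] h4 h5 h6 h7 K M f _ _ sec.
set S := X0 *m Y1 in hST hSp h4 *.
have Su : S \in unitmx := posdef_unit _ _ hSp.
pose Q := invmx S.
have QT : Q^T = Q by rewrite /Q trmx_inv hST.
have QS : Q *m S = 1%:M by rewrite /Q mulVmx.
have SQ : S *m Q = 1%:M by rewrite /Q mulmxV.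
have Acl : A + B *m K = X1 *m Y1 *m Q.
  have e1 : A *m X0 *m Y1 *m Q = A by rewrite -(mulmxA A X0 Y1) -/S -mulmxA SQ mulmx1.
  have e2 : L *m F0 *m Y1 *m Q = 0 by rewrite -(mulmxA L) h7 mulmx0 mul0mx.
  have e3 : B *m U0 *m Y1 *m Q = B *m K by rewrite /K /Q !mulmxA.
  by rewrite hX1 !mulmxDl e1 e2 e3 addr0.
have Lcl : L + B *m M = - (S *m H^T).
  have : X1 *m Y2 = L + B *m M.
    rewrite hX1 !mulmxDl -!mulmxA h5 h6 mulmx0 add0r mulmx1 addrC.
    by rewrite /M.
  move=> <-; apply/eqP; rewrite -addr_eq0; apply/eqP.
  exact: h4.
set Z := X1 *m Y1 in Acl hNT hNn.
have NZ : Y1^T *m X1^T + Z = Z^T + Z by rewrite /Z trmx_mul.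
rewrite NZ in hNn.
have Qinj : forall v : 'cV[R]_n, v != 0 -> Q *m v != 0.
  move=> w wn0; apply/negP => /eqP Qv0; move/negP: wn0; apply; apply/eqP.
  by rewrite -[w]mul1mx -SQ -mulmxA Qv0 mulmx0.
have Qpos : forall v : 'cV[R]_n, v != 0 -> 0 < qform Q v.
  move=> v vn0.
  have <- : qform S (Q *m v) = qform Q v.
    by rewrite /qform trmx_mul QT -(mulmxA _ Q S) QS mulmx1 mulmxA.
  exact/hSp/Qinj.
have [c1 [c2 [c10 [c12 Hb]]]] := qform_bounds _ _ Qpos.
pose P := - (Q *m (Z^T + Z) *m Q).
have Ppos : forall v : 'cV[R]_n, v != 0 -> 0 < qform P v.
  move=> v vn0; rewrite /P qformN qformQ // oppr_gt0.
  exact/hNn/Qinj.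
have [c3 [C3 [c30 [c3C Hb3]]]] := qform_bounds _ _ Ppos.
have c20 : 0 < c2 := lt_le_trans c10 c12.
pose k := c3 / c2.
have k0 : 0 < k by rewrite divr_gt0.
have kc2 : k * c2 = c3 by rewrite /k mulrVK ?unitfE ?gt_eqF.
set F := fun (t : R) (x : 'cV[R]_n) => _.
have Hd : forall t v, ((F t v)^T *m Q *m v) 0 0 + (v^T *m Q *m F t v) 0 0 <= - (k * qform Q v).
  move=> t v.
  have -> : F t v = Z *m Q *m v - S *m H^T *m f t (H *m v).
    by rewrite /F Acl Lcl mulNmx.
  rewrite hd_alg //.
  have := Hb3 v; rewrite /P qformN qformQ // => -[Hl _].
  have [_ Hu] := Hb v.
  have hs := sec t (H *m v).
  nra.
have decay := lyap_decay _ _ _ _ _ _ k0 c10 Hb Hd.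
pose q := c1 / c2.
have q0 : 0 < q by rewrite divr_gt0.
have c2q : c2 * q = c1 by rewrite /q mulrC mulrVK ?unitfE ?gt_eqF.
have q1 : q <= 1 by rewrite /q ler_pdivrMr // mul1r.
have sqlt : forall a b : R, 0 <= a -> 0 < b -> a ^+ 2 < b ^+ 2 -> a < b.
  move=> a b a0 b0 h; rewrite ltNge; apply/negP => ba; move: h; rewrite ltNge.
  by move/negP; apply; rewrite ler_pXn2r // ?nnegrE // ltW.
have stab : forall e0 : R, 0 < e0 -> forall t0 t1 x, is_solution F t0 t1 x ->
    `|x t0| < e0 * q -> forall t, t0 <= t < t1 -> `|x t| < e0.
  move=> e0 e00 t0 t1 x sol x0 t /andP[t0t tt1].
  have Hdec := decay t0 t1 x sol t ltac:(by rewrite t0t tt1).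
  have E1 : 1 <= expR (k * (t - t0)).
    apply: le_trans (expR_ge1Dx _); rewrite lerDl mulr_ge0 // ?subr_ge0 // ltW //.
  apply: sqlt => //.
  have X0n := normr_ge0 (x t0).
  have Xn := normr_ge0 (x t).
  have h1 : `|x t0| ^+ 2 < (e0 * q) ^+ 2 by rewrite ltr_pXn2r // ?nnegrE // mulr_ge0 // ltW.
  have h2 : c2 * (e0 * q) ^+ 2 <= c1 * e0 ^+ 2.
    have -> : c2 * (e0 * q) ^+ 2 = c1 * (e0 ^+ 2 * q) by rewrite -c2q; ring.
    rewrite ler_pM2l // -[leRHS]mulr1 ler_pM2l ?exprn_gt0 //.
  have h3 : c1 * `|x t| ^+ 2 <= c1 * `|x t| ^+ 2 * expR (k * (t - t0)).
    by rewrite -[leLHS]mulr1 ler_wpM2l // mulr_ge0 // ?exprn_ge0 // ltW.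
  have h4' : c1 * `|x t| ^+ 2 < c1 * e0 ^+ 2.
    apply: (le_lt_trans h3); apply: (le_lt_trans Hdec); apply: lt_le_trans h2.
    by rewrite ltr_pM2l.
  by rewrite ltr_pM2l in h4'.
split; [|split].
- move=> e e0; exists (e * q); split; first by rewrite mulr_gt0.
  exact: stab.
- move=> a a0; exists (a / q); split; first by rewrite divr_gt0.
  move=> t0 t1 x sol xa; apply: (stab (a / q)); first by rewrite divr_gt0.
    exact: sol.
  by rewrite divfK ?gt_eqF.
- move=> eta e eta0 e0.
  pose TT := c2 * eta ^+ 2 / (c1 * e ^+ 2 * k).
  have ce0 : 0 < c1 * e ^+ 2 * k by apply: mulr_gt0 => //; apply: mulr_gt0 => //; apply: exprn_gt0.
  have TT0 : 0 < TT by rewrite /TT divr_gt0 // ?mulr_gt0 // ?exprn_gt0.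
  have kT : k * TT * (c1 * e ^+ 2) = c2 * eta ^+ 2.
    by rewrite /TT; field; rewrite !gt_eqF.
  exists TT; split => // t0 t1 x sol x0 t /andP[tT tt1].
  have t0t : t0 <= t by apply: le_trans tT; rewrite lerDl ltW.
  have Hdec := decay t0 t1 x sol t ltac:(by rewrite t0t tt1).
  have E1 : 1 + k * TT <= expR (k * (t - t0)).
    by apply: le_trans (expR_ge1Dx _); rewrite lerD2l ler_pM2l //; lra.
  apply: (sqlt _ _ (normr_ge0 _) e0).
  have X0n := normr_ge0 (x t0).
  have Xn := normr_ge0 (x t).
  set E := expR (k * (t - t0)) in Hdec E1.
  have h1 : `|x t0| ^+ 2 < eta ^+ 2 by rewrite ltr_pXn2r // ?nnegrE // ltW.
  have h2 : c1 * `|x t| ^+ 2 * E < E * (c1 * e ^+ 2).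
    apply: (le_lt_trans Hdec).
    apply: (@lt_le_trans _ _ (c2 * eta ^+ 2)); first by rewrite ltr_pM2l.
    rewrite -kT ler_wpM2r // ?mulr_ge0 ?exprn_ge0 // ?ltW //.
    apply: lt_le_trans E1; lra.
  have Ep : 0 < E by apply: expR_gt0.
  by rewrite [c1 * _ * E]mulrC !ltr_pM2l // in h2.
Qed.
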